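(* Under the bilayer setting below (with $U$ even), let $\tilde\Psi_R$ be a solution of $\partial_x\tilde\Psi=A(x)\tilde\Psi$ of the form $$\tilde\Psi_R(x)=\begin{cases}\psi_R(x)+r(\theta)\psi_L(x)+\alpha_1\psi_+(x), & x<-x_0,\\ t(\theta)\psi_R(x)+\alpha_2\psi_-(x), & x>x_0,\end{cases}$$ with $r(\theta),t(\theta),\alpha_1,\alpha_2\in\mathbb{C}$ and $t(\theta)\neq0$. Then $q(\theta)=i\,\frac{r(\theta)}{t(\theta)}$ is real.
   Context: Bilayer setting: $U:\mathbb{R}\to\mathbb{R}$ piecewise continuous, supported in $[-x_0,x_0]$, even ($U(-x)=U(x)$). Fix $E>0$, $m,\hbar>0$, $\theta\in(-\pi/2,\pi/2)$; let $\kappa=\sqrt{2mE}/\hbar$, $a=\kappa\sin\theta$, $k=\kappa\cos\theta$, $\lambda=\sqrt{a^2+\kappa^2}$, $\tilde U(x)=\frac{2m}{\hbar^2}(U(x)-E)$. The ODE is $\partial_x\tilde\Psi=A(x)\tilde\Psi$ for $\tilde\Psi=(\Psi_1,\Phi_1,\Psi_2,\Phi_2)^t:\mathbb{R}\to\mathbb{C}^4$, $A(x)=\begin{pmatrix} a&1&0&0\\0&a&\tilde U(x)&0\\0&0&-a&1\\ \tilde U(x)&0&0&-a\end{pmatrix}$ (bilayer graphene equation after separation $e^{iay}$). Let $v_R=(a+ik,-\kappa^2,-(a-ik),-\kappa^2)^t$, $v_L=(a-ik,-\kappa^2,-(a+ik),-\kappa^2)^t$, $v_+=(a+\lambda,\kappa^2,a-\lambda,-\kappa^2)^t$,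 $v_-=(a-\lambda,\kappa^2,a+\lambda,-\kappa^2)^t$, and $\psi_R(x)=e^{ikx}v_R$, $\psi_L(x)=e^{-ikx}v_L$, $\psi_+(x)=e^{\lambda x}v_+$, $\psi_-(x)=e^{-\lambda x}v_-$; these solve the ODE where $U=0$. $r(\theta)$ and $t(\theta)$ are the reflection and transmission amplitudes, and $\theta$ is called magic if $r(\theta)=0$. *)

(* Defs.v *)
From Stdlib Require Import Reals Lra List.
Open Scope R_scope.

Definition Cplx := (R * R)%type.
Definition RtoC (x : R) : Cplx := (x, 0).
Definition Ci : Cplx := (0, 1).
Definition Cadd (z w : Cplx) : Cplx := (fst z + fst w, snd z + snd w).
Definition Cmul (z w : Cplx) : Cplx :=
  (fst z * fst w - snd z * snd w, fst z * snd w + snd z * fst w).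
Definition Cinv (z : Cplx) : Cplx :=
  (fst z / (fst z ^ 2 + snd z ^ 2), - snd z / (fst z ^ 2 + snd z ^ 2)).
Definition Cdiv (z w : Cplx) : Cplx := Cmul z (Cinv w).
Definition Cexpi (s : R) : Cplx := (cos s, sin s).
Definition Rscal (c : R) (z : Cplx) : Cplx := (c * fst z, c * snd z).

(* ---------- vectors of C^4 : (Psi1, Phi1, Psi2, Phi2) ---------- *)
Record V4 := mkV4 { c1 : Cplx; c2 : Cplx; c3 : Cplx; c4 : Cplx }.
Definition V4add (v w : V4) : V4 :=
  mkV4 (Cadd (c1 v) (c1 w)) (Cadd (c2 v) (c2 w)) (Cadd (c3 v) (c3 w)) (Cadd (c4 v) (c4 w)).
Definition V4scal (z : Cplx) (v : V4) : V4 :=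
  mkV4 (Cmul z (c1 v)) (Cmul z (c2 v)) (Cmul z (c3 v)) (Cmul z (c4 v)).

(* A(x) v with Ut = tilde U (x) *)
Definition Amul (a Ut : R) (v : V4) : V4 :=
  mkV4 (Cadd (Rscal a (c1 v)) (c2 v))
       (Cadd (Rscal a (c2 v)) (Rscal Ut (c3 v)))
       (Cadd (Rscal (- a) (c3 v)) (c4 v))
       (Cadd (Rscal Ut (c1 v)) (Rscal (- a) (c4 v))).

Definition Ccont (f : R -> Cplx) (x : R) : Prop :=
  continuity_pt (fun y => fst (f y)) x /\ continuity_pt (fun y => snd (f y)) x.
Definition Cderiv (f : R -> Cplx) (x : R) (d : Cplx) : Prop :=
  derivable_pt_lim (fun y => fst (f y)) x (fst d) /\
  derivable_pt_lim (fun y => snd (f y)) x (snd d).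
Definition V4cont (F : R -> V4) (x : R) : Prop :=
  Ccont (fun y => c1 (F y)) x /\ Ccont (fun y => c2 (F y)) x /\
  Ccont (fun y => c3 (F y)) x /\ Ccont (fun y => c4 (F y)) x.
Definition V4deriv (F : R -> V4) (x : R) (D : V4) : Prop :=
  Cderiv (fun y => c1 (F y)) x (c1 D) /\ Cderiv (fun y => c2 (F y)) x (c2 D) /\
  Cderiv (fun y => c3 (F y)) x (c3 D) /\ Cderiv (fun y => c4 (F y)) x (c4 D).

Definition right_limit (U : R -> R) (x L : R) : Prop :=
  forall eps, 0 < eps -> exists delta, 0 < delta /\
    forall y, x < y < x + delta -> Rabs (U y - L) < eps.
Definition left_limit (U : R -> R) (x L : R) : Prop :=
  forall eps, 0 < eps -> exists delta, 0 < delta /\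
    forall y, x - delta < y < x -> Rabs (U y - L) < eps.
Definition piecewise_continuous (U : R -> R) : Prop :=
  exists D : list R,
    (forall x, ~ In x D -> continuity_pt U x) /\
    (forall x, In x D -> (exists L, left_limit U x L) /\ (exists L, right_limit U x L)).

Definition kappa (m hbar E : R) : R := sqrt (2 * m * E) / hbar.
Definition a_par (m hbar E theta : R) : R := kappa m hbar E * sin theta.
Definition k_par (m hbar E theta : R) : R := kappa m hbar E * cos theta.
Definition lam (m hbar E theta : R) : R :=
  sqrt (a_par m hbar E theta ^ 2 + kappa m hbar E ^ 2).
Definition Utilde (U : R -> R) (m hbar E : R) (x : R) : R :=
  2 * m / hbar ^ 2 * (U x - E).

(* solution of d/dx Psi = A(x) Psi for piecewise continuous coefficients:
   continuous everywhere, and differentiable satisfying the ODE off a finite set *)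
Definition is_solution (U : R -> R) (m hbar E theta : R) (Psi : R -> V4) : Prop :=
  (forall x, V4cont Psi x) /\
  exists S : list R, forall x, ~ In x S ->
    V4deriv Psi x (Amul (a_par m hbar E theta) (Utilde U m hbar E x) (Psi x)).

Section Vectors.
Variables m hbar E theta : R.
Let a := a_par m hbar E theta.
Let k := k_par m hbar E theta.
Let kp := kappa m hbar E.
Let l := lam m hbar E theta.
Definition vR : V4 := mkV4 (a, k) (- kp ^ 2, 0) (- a, k) (- kp ^ 2, 0).
Definition vL : V4 := mkV4 (a, - k) (- kp ^ 2, 0) (- a, - k) (- kp ^ 2, 0).
Definition vP : V4 := mkV4 (a + l, 0) (kp ^ 2, 0) (a - l, 0) (- kp ^ 2, 0).
Definition vM : V4 := mkV4 (a - l, 0) (kp ^ 2, 0) (a + l, 0) (- kp ^ 2, 0).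
Definition psiR (x : R) : V4 := V4scal (Cexpi (k * x)) vR.
Definition psiL (x : R) : V4 := V4scal (Cexpi (- k * x)) vL.
Definition psiP (x : R) : V4 := V4scal (RtoC (exp (l * x))) vP.
Definition psiM (x : R) : V4 := V4scal (RtoC (exp (- l * x))) vM.
End Vectors.

(* Main.v *)
From Stdlib Require Import Reals List Lra.
Require Import Defs.
Open Scope R_scope.

Lemma const_base (f : R -> R) a b : a <= b ->
  (forall x, a <= x <= b -> continuity_pt f x) ->
  (forall x, a < x < b -> derivable_pt_lim f x 0) -> f a = f b.
Proof.
  intros Hab Hc Hd.
  assert (pr : forall x, a < x < b -> derivable_pt f x).
  { intros x Hx. exists 0. apply Hd; exact Hx. }
  pose proof (null_derivative_loc f a b pr Hc) as H.
  assert (H' : constant_D_eq f (fun x => a <= x <= b) (f a)).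
  { apply H. intros x P. apply derive_pt_eq_0. apply Hd; exact P. }
  symmetry. apply H'. lra.
Qed.

Lemma const_lemma (f : R -> R) (L : list R) : forall a b, a <= b ->
  (forall x, a <= x <= b -> continuity_pt f x) ->
  (forall x, a < x < b -> ~ In x L -> derivable_pt_lim f x 0) -> f a = f b.
Proof.
  induction L as [|p L IH]; intros a b Hab Hc Hd.
  - apply const_base; auto.
  - destruct (Rlt_dec a p) as [Hap|Hap]; [destruct (Rlt_dec p b) as [Hpb|Hpb]|].
    + transitivity (f p).
      * apply IH; [lra| intros; apply Hc; lra|].
        intros x Hx Hn. apply Hd; [lra|]. intros [E|E]; [lra|tauto].
      * apply IH; [lra| intros; apply Hc; lra|].
        intros x Hx Hn. apply Hd; [lra|]. intros [E|E]; [lra|tauto].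
    + apply IH; auto. intros x Hx Hn. apply Hd; auto. intros [E|E]; [lra|tauto].
    + apply IH; auto. intros x Hx Hn. apply Hd; auto. intros [E|E]; [lra|tauto].
Qed.

Definition cross (z w : Cplx) : R := fst z * snd w - snd z * fst w.

Lemma cross_deriv (f g : R -> Cplx) x df dg :
  Cderiv f x df -> Cderiv g x dg ->
  derivable_pt_lim (fun y => cross (f y) (g y)) x (cross df (g x) + cross (f x) dg).
Proof.
  intros [H1 H2] [H3 H4]. unfold cross.
  pose proof (derivable_pt_lim_minus _ _ _ _ _
    (derivable_pt_lim_mult _ _ _ _ _ H1 H4) (derivable_pt_lim_mult _ _ _ _ _ H2 H3)) as H.
  unfold minus_fct, mult_fct in H.
  replace (fst df * snd (g x) - snd df * fst (g x) + (fst (f x) * snd dg - snd (f x) * fst dg))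
    with (fst df * snd (g x) + fst (f x) * snd dg - (snd df * fst (g x) + snd (f x) * fst dg)) by ring.
  exact H.
Qed.

Lemma cross_cont (f g : R -> Cplx) x : Ccont f x -> Ccont g x ->
  continuity_pt (fun y => cross (f y) (g y)) x.
Proof.
  intros [H1 H2] [H3 H4]. unfold cross.
  exact (continuity_pt_minus _ _ _ (continuity_pt_mult _ _ _ H1 H4) (continuity_pt_mult _ _ _ H2 H3)).
Qed.

Lemma rderiv_neg (h : R -> R) x d : derivable_pt_lim h (- x) d ->
  derivable_pt_lim (fun y => h (- y)) x (- d).
Proof.
  intros H.
  assert (Ho : derivable_pt_lim (fun y => - y) x (-1)).
  { pose proof (derivable_pt_lim_opp _ _ _ (derivable_pt_lim_id x)) as K.
    unfold opp_fct, id in K. exact K. }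
  pose proof (derivable_pt_lim_comp _ _ _ _ _ Ho H) as K. unfold comp in K.
  replace (- d) with (d * -1) by ring. exact K.
Qed.

Lemma Cderiv_neg (f : R -> Cplx) x d : Cderiv f (- x) d ->
  Cderiv (fun y => f (- y)) x (- fst d, - snd d).
Proof. intros [H1 H2]; split; simpl; apply (rderiv_neg (fun y => _ (f y))); assumption. Qed.

Lemma rcont_neg (h : R -> R) x : continuity_pt h (- x) -> continuity_pt (fun y => h (- y)) x.
Proof.
  intros H. assert (Ho : continuity_pt (fun y => - y) x).
  { pose proof (continuity_pt_opp _ _ (derivable_continuous_pt _ _ (derivable_pt_id x))) as K.
    exact K. }
  exact (continuity_pt_comp _ _ _ Ho H).
Qed.

Lemma Ccont_neg (f : R -> Cplx) x : Ccont f (- x) -> Ccont (fun y => f (- y)) x.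
Proof. intros [H1 H2]; split; apply (rcont_neg (fun y => _ (f y))); assumption. Qed.

Lemma plusd (f g : R -> R) x l1 l2 : derivable_pt_lim f x l1 -> derivable_pt_lim g x l2 ->
  derivable_pt_lim (fun y => f y + g y) x (l1 + l2).
Proof. intros H1 H2. exact (derivable_pt_lim_plus _ _ _ _ _ H1 H2). Qed.
Lemma dval (f : R -> R) x l l' : derivable_pt_lim f x l -> l = l' -> derivable_pt_lim f x l'.
Proof. intros H ->; exact H. Qed.

Definition Fim (Psi : R -> V4) (x : R) : R :=
  cross (c1 (Psi x)) (c2 (Psi (-x))) + cross (c2 (Psi x)) (c1 (Psi (-x))) +
  cross (c3 (Psi x)) (c4 (Psi (-x))) + cross (c4 (Psi x)) (c3 (Psi (-x))).

Lemma Fim_deriv (Psi : R -> V4) a u1 u2 x :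
  V4deriv Psi x (Amul a u1 (Psi x)) -> V4deriv Psi (-x) (Amul a u2 (Psi (-x))) -> u1 = u2 ->
  derivable_pt_lim (Fim Psi) x 0.
Proof.
  intros [A1 [A2 [A3 A4]]] [B1 [B2 [B3 B4]]] Hu.
  apply Cderiv_neg in B1. apply Cderiv_neg in B2. apply Cderiv_neg in B3. apply Cderiv_neg in B4.
  unfold Fim. eapply dval.
  - apply plusd; [apply plusd; [apply plusd|]|].
    + exact (cross_deriv (fun y => c1 (Psi y)) (fun y => c2 (Psi (-y))) _ _ _ A1 B2).
    + exact (cross_deriv (fun y => c2 (Psi y)) (fun y => c1 (Psi (-y))) _ _ _ A2 B1).
    + exact (cross_deriv (fun y => c3 (Psi y)) (fun y => c4 (Psi (-y))) _ _ _ A3 B4).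
    + exact (cross_deriv (fun y => c4 (Psi y)) (fun y => c3 (Psi (-y))) _ _ _ A4 B3).
  - subst u2. destruct (Psi x) as [[p1 q1] [p2 q2] [p3 q3] [p4 q4]].
    destruct (Psi (-x)) as [[r1 s1] [r2 s2] [r3 s3] [r4 s4]].
    unfold cross, Amul, Cadd, Rscal; simpl. ring.
Qed.

Lemma Fim_cont (Psi : R -> V4) x : V4cont Psi x -> V4cont Psi (-x) -> continuity_pt (Fim Psi) x.
Proof.
  intros [A1 [A2 [A3 A4]]] [B1 [B2 [B3 B4]]].
  apply Ccont_neg in B1. apply Ccont_neg in B2. apply Ccont_neg in B3. apply Ccont_neg in B4.
  unfold Fim. apply continuity_pt_plus; [apply continuity_pt_plus; [apply continuity_pt_plus|]|].
  + exact (cross_cont (fun y => c1 (Psi y)) (fun y => c2 (Psi (-y))) _ A1 B2).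
  + exact (cross_cont (fun y => c2 (Psi y)) (fun y => c1 (Psi (-y))) _ A2 B1).
  + exact (cross_cont (fun y => c3 (Psi y)) (fun y => c4 (Psi (-y))) _ A3 B4).
  + exact (cross_cont (fun y => c4 (Psi y)) (fun y => c3 (Psi (-y))) _ A4 B3).
Qed.
Lemma test (Psi : R -> V4) m hbar E theta r t alpha1 alpha2 y :
  Psi y = V4add (V4scal t (psiR m hbar E theta y)) (V4scal alpha2 (psiM m hbar E theta y)) ->
  Psi (-y) = V4add (psiR m hbar E theta (-y))
               (V4add (V4scal r (psiL m hbar E theta (-y)))
                      (V4scal alpha1 (psiP m hbar E theta (-y)))) ->
  Fim Psi y = 4 * kappa m hbar E ^ 2 * k_par m hbar E theta *
     (sin (k_par m hbar E theta * y) ^ 2 + cos (k_par m hbar E theta * y) ^ 2) *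
     (fst t * fst r + snd t * snd r).
Proof.
  intros H1 H2. unfold Fim. rewrite H1, H2.
  unfold psiR, psiL, psiP, psiM, vR, vL, vP, vM.
  set (k := k_par m hbar E theta).
  replace (k * - y) with (- (k * y)) by ring.
  replace (- k * - y) with (k * y) by ring.
  unfold Cexpi. rewrite cos_neg, sin_neg.
  destruct r as [r1 r2]; destruct t as [t1 t2]; destruct alpha1; destruct alpha2.
  unfold V4add, V4scal, RtoC, Cmul, Cadd, cross; simpl. ring.
Qed.
Theorem proposition3 (U : R -> R) (x0 E m hbar theta : R)
  (r t alpha1 alpha2 : Cplx) (Psi : R -> V4) :
  piecewise_continuous U ->
  0 < x0 ->
  (forall x, x0 < Rabs x -> U x = 0) ->
  (forall x, U (- x) = U x) ->
  0 < E -> 0 < m -> 0 < hbar ->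
  - (PI / 2) < theta < PI / 2 ->
  is_solution U m hbar E theta Psi ->
  (forall x, x < - x0 ->
     Psi x = V4add (psiR m hbar E theta x)
               (V4add (V4scal r (psiL m hbar E theta x))
                      (V4scal alpha1 (psiP m hbar E theta x)))) ->
  (forall x, x0 < x ->
     Psi x = V4add (V4scal t (psiR m hbar E theta x))
                   (V4scal alpha2 (psiM m hbar E theta x))) ->
  t <> (0, 0) ->
  snd (Cmul Ci (Cdiv r t)) = 0.
Proof.
  intros _ Hx0 _ Hev HE Hm Hh Hth [Hc [S HS]] Hl Hr _.
  set (y := x0 + 1).
  assert (Hconst : Fim Psi (- y) = Fim Psi y).
  { apply (const_lemma _ (S ++ map Ropp S)); [unfold y; lra| |].
    - intros x _. apply Fim_cont; apply Hc.
    - intros x _ Hn. eapply Fim_deriv.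
      + apply HS. intro Hi; apply Hn, in_or_app; left; exact Hi.
      + apply HS. intro Hi; apply Hn, in_or_app; right.
        rewrite <- (Ropp_involutive x). apply in_map; exact Hi.
      + unfold Utilde. rewrite Hev. reflexivity. }
  assert (Hanti : Fim Psi (- y) = - Fim Psi y).
  { unfold Fim. rewrite Ropp_involutive. unfold cross. ring. }
  assert (H0 : Fim Psi y = 0) by lra.
  rewrite (test Psi m hbar E theta r t alpha1 alpha2 y) in H0;
    [| apply Hr; unfold y; lra | apply Hl; unfold y; lra].
  assert (Hsc : forall z, sin z ^ 2 + cos z ^ 2 = 1).
  { intro z. rewrite <- !Rsqr_pow2. apply sin2_cos2. }
  rewrite Hsc in H0.
  assert (Hk : 0 < kappa m hbar E).
  { unfold kappa. apply Rdiv_lt_0_compat; [apply sqrt_lt_R0; nra | lra]. }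
  assert (Hkp : 0 < k_par m hbar E theta).
  { unfold k_par. apply Rmult_lt_0_compat; [lra | apply cos_gt_0; lra]. }
  assert (Hz : fst t * fst r + snd t * snd r = 0).
  { assert (P : 0 < 4 * kappa m hbar E ^ 2 * k_par m hbar E theta * 1).
    { assert (0 < kappa m hbar E ^ 2) by (apply pow_lt; lra). nra. }
    apply (Rmult_eq_reg_l (4 * kappa m hbar E ^ 2 * k_par m hbar E theta * 1)); [|lra].
    rewrite H0. ring. }
  destruct r as [r1 r2]; destruct t as [t1 t2]; simpl in Hz.
  unfold Cmul, Cdiv, Cinv, Ci; simpl.
  set (D := t1 * (t1 * 1) + t2 * (t2 * 1)).
  replace (0 * (r1 * (- t2 / D) + r2 * (t1 / D)) + 1 * (r1 * (t1 / D) - r2 * (- t2 / D)))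
    with ((t1 * r1 + t2 * r2) * / D) by (unfold Rdiv; ring).
  rewrite Hz. ring.
Qed.
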